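(* Let $\alpha\ge0$, $\mu\ge0$. There is a positive constant $M$, independent of $n$, such that for all $g\in C_B[0,\infty)$, $n\in\mathbb{N}$ and $x\in[0,\infty)$, $$|T_n(g;x)-g(x)|\le 2M\left\{\min\!\left(1,\frac{\chi_n(x)}{2}\right)\|g\|_{C_B[0,\infty)}+\omega_2\!\left(g;\sqrt{\frac{\chi_n(x)}{2}}\right)\right\},$$ where $\chi_n(x)=\Delta_1+\Delta_2$ with $\Delta_1=\dfrac{2\alpha x^2}{n}$ and $\Delta_2=\dfrac{1}{n^2}x\left(4x^3\alpha^2+4\alpha x+n\right)+\dfrac{2\mu x}{n}\dfrac{e_\mu(-nx)}{e_\mu(nx)}$.
   Context: $C_B[0,\infty)$ denotes the space of uniformly continuous bounded functions on $[0,\infty)$ with sup norm. The second order modulus of continuity is $\omega_2(f;\delta)=\sup_{0<s\le\delta}\|f(\cdot+2s)-2f(\cdot+s)+f(\cdot)\|_{C_B[0,\infty)}$. For $\mu>-\tfrac12$ define $\gamma_\mu(2k)=\dfrac{2^{2k}k!\,\Gamma(k+\mu+1/2)}{\Gamma(\mu+1/2)}$ and $\gamma_\mu(2k+1)=\dfrac{2^{2k+1}k!\,\Gamma(k+\mu+3/2)}{\Gamma(\mu+1/2)}$, $k\ge0$; $e_\mu(x)=\sum_{k\ge0} x^k/\gamma_\mu(k)$; $\theta_k=0$ if $k$ is even and $\theta_k=1$ if $k$ is odd. Let $h_k^\mu(\xi,\alpha)=\gamma_\mu(k)\sum_{j=0}^{\lfloor k/2\rfloor}\dfrac{\alpha^j\xi^{k-2j}}{j!\,\gamma_\mu(k-2j)}$.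 For $\alpha\ge0,\mu\ge0$, $n\in\mathbb{N}$ and $x\in[0,\infty)$ define $$T_n(f;x)=\frac{1}{e^{\alpha x^2}e_\mu(nx)}\sum_{k=0}^\infty \frac{h_k^\mu(n,\alpha)}{\gamma_\mu(k)}x^k f\!\left(\frac{k+2\mu\theta_k}{n}\right).$$ *)

(* Defs.v *)
From Stdlib Require Import Reals Lra.
From Coquelicot Require Import Coquelicot.
Open Scope R_scope.

Fixpoint poch (a : R) (k : nat) : R :=
  match k with
  | O => 1
  | S k' => poch a k' * (a + INR k')
  end.

(* gamma_mu(2q)   = 2^(2q)   q! Gamma(q+mu+1/2)/Gamma(mu+1/2) = 2^(2q) q! (mu+1/2)_q
   gamma_mu(2q+1) = 2^(2q+1) q! Gamma(q+mu+3/2)/Gamma(mu+1/2) = 2^(2q+1) q! (mu+1/2)_(q+1) *)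
Definition gamma_mu (mu : R) (k : nat) : R :=
  let q := Nat.div2 k in
  if Nat.even k then 2 ^ k * INR (Factorial.fact q) * poch (mu + /2) q
  else 2 ^ k * INR (Factorial.fact q) * poch (mu + /2) (S q).

Definition e_mu (mu x : R) : R := Series (fun k => x ^ k / gamma_mu mu k).

Definition theta (k : nat) : R := if Nat.even k then 0 else 1.

Definition h_mu (mu : R) (k : nat) (xi alpha : R) : R :=
  gamma_mu mu k *
  sum_f_R0 (fun j => alpha ^ j * xi ^ (k - 2 * j) /
                     (INR (Factorial.fact j) * gamma_mu mu (k - 2 * j))) (Nat.div2 k).

Definition T_op (alpha mu : R) (n : nat) (f : R -> R) (x : R) : R :=
  / (exp (alpha * x ^ 2) * e_mu mu (INR n * x)) *
  Series (fun k => h_mu mu k (INR n) alpha / gamma_mu mu k * x ^ k *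
                   f ((INR k + 2 * mu * theta k) / INR n)).

Definition CB (g : R -> R) : Prop :=
  (exists B, forall x, 0 <= x -> Rabs (g x) <= B) /\
  (forall eps, 0 < eps -> exists delta, 0 < delta /\
     forall x y, 0 <= x -> 0 <= y -> Rabs (x - y) < delta ->
       Rabs (g x - g y) < eps).

Definition supnorm (g : R -> R) : R :=
  real (Lub_Rbar (fun y => exists x, 0 <= x /\ y = Rabs (g x))).

(* second order modulus of continuity; for delta <= 0 the set is empty and the
   value is real m_infty = 0 *)
Definition omega2 (g : R -> R) (delta : R) : R :=
  real (Lub_Rbar (fun y => exists s t, 0 < s /\ s <= delta /\ 0 <= t /\
          y = Rabs (g (t + 2 * s) - 2 * g (t + s) + g t))).

Definition chi (alpha mu : R) (n : nat) (x : R) : R :=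
  let nn := INR n in
  2 * alpha * x ^ 2 / nn +
  (/ nn ^ 2 * x * (4 * x ^ 3 * alpha ^ 2 + 4 * alpha * x + nn) +
   2 * mu * x / nn * (e_mu mu (- (nn * x)) / e_mu mu (nn * x))).

(* Main.v *)
Require Import Defs.
From Stdlib Require Import Reals.
From Coquelicot Require Import Coquelicot.
Open Scope R_scope.
From Stdlib Require Import Lra Lia ZArith Classical.
Open Scope R_scope.


Definition sk (mu : R) (k : nat) : R := INR k + 2 * mu * theta k.

Lemma even_2q q : Nat.even (2 * q) = true. Proof. apply Nat.even_even. Qed.
Lemma even_2q1 q : Nat.even (S (2 * q)) = false.
Proof. replace (S (2*q)) with (2*q+1)%nat by lia. apply Nat.even_odd. Qed.

Lemma theta_2q q : theta (2*q) = 0. Proof. unfold theta; now rewrite even_2q. Qed.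
Lemma theta_2q1 q : theta (S (2*q)) = 1. Proof. unfold theta; now rewrite even_2q1. Qed.

Lemma parity k : exists q, k = (2*q)%nat \/ k = S (2*q).
Proof. destruct (Nat.Even_or_Odd k) as [[q H]|[q H]]; exists q; lia. Qed.

Lemma theta_SS k : theta (S (S k)) = theta k.
Proof. reflexivity. Qed.

Lemma theta_S k : theta (S k) = 1 - theta k.
Proof. destruct (parity k) as [q [->| ->]].
 - rewrite theta_2q, theta_2q1; ring.
 - replace (S (S (2*q))) with (2 * S q)%nat by lia. rewrite theta_2q, theta_2q1; ring.
Qed.

Lemma theta_range k : 0 <= theta k <= 1.
Proof. unfold theta; destruct (Nat.even k); lra. Qed.

Lemma gamma_2q mu q : gamma_mu mu (2*q) = 2^(2*q) * INR (Factorial.fact q) * poch (mu + /2) q.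
Proof. unfold gamma_mu; cbv zeta. rewrite even_2q, Nat.div2_double. reflexivity. Qed.
Lemma gamma_2q1 mu q : gamma_mu mu (S (2*q)) = 2^(S (2*q)) * INR (Factorial.fact q) * poch (mu + /2) (S q).
Proof. unfold gamma_mu; cbv zeta. rewrite even_2q1, Nat.div2_succ_double. reflexivity. Qed.

Lemma gamma_S mu k : gamma_mu mu (S k) = gamma_mu mu k * sk mu (S k).
Proof.
  unfold sk. destruct (parity k) as [q [->| ->]].
  - rewrite gamma_2q1, gamma_2q, theta_2q1. simpl poch. simpl pow.
    rewrite S_INR, mult_INR. simpl INR. field.
  - replace (S (S (2*q))) with (2 * S q)%nat by lia.
    rewrite gamma_2q1, gamma_2q, theta_2q. simpl poch.
    replace (2 * S q)%nat with (S (S (2*q))) by lia.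
    simpl pow. change (Factorial.fact (S q)) with (S q * Factorial.fact q)%nat.
    rewrite mult_INR, !S_INR, mult_INR. simpl INR. field.
Qed.

Lemma gamma_0 mu : gamma_mu mu 0 = 1.
Proof. unfold gamma_mu; simpl. ring. Qed.

Lemma sk_pos mu k : 0 <= mu -> INR (S k) <= sk mu (S k).
Proof. intros. unfold sk. pose proof (theta_range (S k)). nra. Qed.

Lemma gamma_ge_fact mu k : 0 <= mu -> INR (Factorial.fact k) <= gamma_mu mu k.
Proof.
  intros Hmu. induction k.
  - rewrite gamma_0. simpl. lra.
  - rewrite gamma_S. change (Factorial.fact (S k)) with (S k * Factorial.fact k)%nat.
    rewrite mult_INR. pose proof (sk_pos mu k Hmu). pose proof (pos_INR (S k)).
    pose proof (pos_INR (Factorial.fact k)). nra.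
Qed.

Lemma gamma_pos mu k : 0 <= mu -> 0 < gamma_mu mu k.
Proof. intros. eapply Rlt_le_trans; [|apply gamma_ge_fact; auto]. apply lt_0_INR, Factorial.lt_O_fact. Qed.

Lemma sk_SS mu k : sk mu (S (S k)) = sk mu k + 2.
Proof. unfold sk. rewrite theta_SS, !S_INR. ring. Qed.

Lemma sk_S mu k : sk mu (S k) = sk mu k + 1 + 2 * mu * (-1)^k.
Proof. unfold sk. rewrite theta_S, S_INR. destruct (parity k) as [q [->| ->]].
  - rewrite theta_2q, pow_1_even. ring.
  - rewrite theta_2q1, pow_1_odd. ring.
Qed.
Lemma sk_0 mu : sk mu 0 = 0.
Proof. unfold sk, theta; simpl; ring. Qed.
Lemma sk_shift mu m j : sk mu (m + 2*j) = sk mu m + 2 * INR j.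
Proof. induction j. - simpl. rewrite Nat.add_0_r; ring.
  - replace (m + 2 * S j)%nat with (S (S (m + 2*j))) by lia. rewrite sk_SS, IHj, S_INR. ring. Qed.


Definition PP (alpha : R) (j : nat) : R := alpha ^ j / INR (Factorial.fact j).
Definition BB (mu nn : R) (m : nat) : R := nn ^ m / gamma_mu mu m.
Definition cc (alpha mu nn : R) (k : nat) : R := h_mu mu k nn alpha / gamma_mu mu k.

Lemma fact_neq0 j : INR (Factorial.fact j) <> 0.
Proof. apply not_0_INR, Factorial.fact_neq_0. Qed.

Lemma cc_eq alpha mu nn k : 0 <= mu ->
  cc alpha mu nn k = sum_f_R0 (fun j => PP alpha j * BB mu nn (k - 2*j)) (Nat.div2 k).
Proof.
  intros Hmu. unfold cc, h_mu. pose proof (gamma_pos mu k Hmu).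
  rewrite Rmult_comm. unfold Rdiv. rewrite Rmult_assoc, Rinv_r, Rmult_1_r by lra.
  apply sum_eq. intros j _. unfold PP, BB.
  pose proof (gamma_pos mu (k - 2*j) Hmu). pose proof (fact_neq0 j). field. lra.
Qed.

Lemma PP_rec alpha j : INR (S j) * PP alpha (S j) = alpha * PP alpha j.
Proof. unfold PP. change (Factorial.fact (S j)) with (S j * Factorial.fact j)%nat.
  rewrite mult_INR. simpl pow. pose proof (fact_neq0 j).
  pose proof (lt_0_INR (S j) (Nat.lt_0_succ j)). field. lra. Qed.

Lemma BB_rec mu nn m : 0 <= mu -> sk mu (S m) * BB mu nn (S m) = nn * BB mu nn m.
Proof. intros Hmu. unfold BB. rewrite gamma_S. simpl pow.
  pose proof (gamma_pos mu m Hmu). pose proof (sk_pos mu m Hmu).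
  pose proof (lt_0_INR (S m) (Nat.lt_0_succ m)). field. lra. Qed.

Lemma sum_shift (f : nat -> R) N : sum_f_R0 f (S N) = f 0%nat + sum_f_R0 (fun i => f (S i)) N.
Proof. induction N. - simpl. ring. - rewrite tech5, IHN, tech5. ring. Qed.

Lemma split_sk alpha mu nn K N : (2*N <= K)%nat ->
  sk mu K * sum_f_R0 (fun j => PP alpha j * BB mu nn (K-2*j)) N =
  sum_f_R0 (fun j => PP alpha j * (sk mu (K-2*j) * BB mu nn (K-2*j))) N +
  2 * sum_f_R0 (fun j => INR j * PP alpha j * BB mu nn (K-2*j)) N.
Proof.
  intros HN. rewrite scal_sum, scal_sum, <- sum_plus. apply sum_eq. intros j Hj.
  replace (sk mu K) with (sk mu (K - 2*j + 2*j)) by (f_equal; lia).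
  rewrite sk_shift. ring.
Qed.

Lemma second_sum alpha mu nn K N :
  sum_f_R0 (fun j => INR j * PP alpha j * BB mu nn (K-2*j)) (S N) =
  alpha * sum_f_R0 (fun i => PP alpha i * BB mu nn (K-2-2*i)) N.
Proof.
  rewrite sum_shift. simpl INR at 1. rewrite Rmult_0_l, Rmult_0_l, Rplus_0_l.
  rewrite scal_sum. apply sum_eq. intros i _.
  replace (K - 2 * S i)%nat with (K - 2 - 2*i)%nat by lia.
  rewrite Rmult_assoc, <- (Rmult_assoc (INR (S i))).
  rewrite PP_rec. ring.
Qed.

Lemma first_sum alpha mu nn K N : 0 <= mu -> (2*N < K)%nat ->
  sum_f_R0 (fun j => PP alpha j * (sk mu (K-2*j) * BB mu nn (K-2*j))) N =
  nn * sum_f_R0 (fun j => PP alpha j * BB mu nn (K-1-2*j)) N.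
Proof.
  intros Hmu HN. rewrite scal_sum. apply sum_eq. intros j Hj.
  replace (K - 2*j)%nat with (S (K-1-2*j)) by lia. rewrite BB_rec by auto. ring.
Qed.

Lemma cc_rec1 alpha mu nn : 0 <= mu -> sk mu 1 * cc alpha mu nn 1 = nn * cc alpha mu nn 0.
Proof.
  intros Hmu. rewrite !cc_eq by auto. simpl Nat.div2. simpl sum_f_R0.
  simpl Nat.sub. transitivity (PP alpha 0 * (sk mu 1 * BB mu nn 1)); [ring|]. rewrite BB_rec by auto. ring.
Qed.

Lemma cc_rec2 alpha mu nn k : 0 <= mu ->
  sk mu (S (S k)) * cc alpha mu nn (S (S k)) = nn * cc alpha mu nn (S k) + 2 * alpha * cc alpha mu nn k.
Proof.
  intros Hmu. rewrite !cc_eq by auto.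
  destruct (parity k) as [q [->| ->]].
  - replace (S (S (2*q))) with (2 * S q)%nat by lia.
    rewrite Nat.div2_double, Nat.div2_succ_double, Nat.div2_double.
    rewrite split_sk by lia. rewrite second_sum.
    rewrite tech5. replace (2 * S q - 2 * S q)%nat with 0%nat by lia.
    rewrite sk_0, Rmult_0_l, Rmult_0_r, Rplus_0_r.
    rewrite first_sum by (auto; lia).
    replace (sum_f_R0 (fun j => PP alpha j * BB mu nn (2 * S q - 1 - 2 * j)) q) with
      (sum_f_R0 (fun j => PP alpha j * BB mu nn (S (2 * q) - 2 * j)) q)
      by (apply sum_eq; intros j Hj; do 2 f_equal; lia).
    replace (sum_f_R0 (fun i => PP alpha i * BB mu nn (2 * S q - 2 - 2 * i)) q) with
      (sum_f_R0 (fun i => PP alpha i * BB mu nn (2 * q - 2 * i)) q)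
      by (apply sum_eq; intros j Hj; do 2 f_equal; lia).
    ring.
  - replace (S (S (S (2*q)))) with (S (2 * S q)) by lia.
    replace (S (S (2*q))) with (2 * S q)%nat by lia. rewrite Nat.div2_double, !Nat.div2_succ_double.
    rewrite split_sk by lia. rewrite second_sum.
    rewrite first_sum by (auto; lia).
    replace (sum_f_R0 (fun j => PP alpha j * BB mu nn (S (2 * S q) - 1 - 2 * j)) (S q)) with
      (sum_f_R0 (fun j => PP alpha j * BB mu nn (2 * S q - 2 * j)) (S q))
      by (apply sum_eq; intros j Hj; do 2 f_equal; lia).
    replace (sum_f_R0 (fun i => PP alpha i * BB mu nn (S (2 * S q) - 2 - 2 * i)) q) with
      (sum_f_R0 (fun i => PP alpha i * BB mu nn (S (2 * q) - 2 * i)) q)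
      by (apply sum_eq; intros j Hj; do 2 f_equal; lia).
    ring.
Qed.

Lemma cc_nonneg alpha mu nn k : 0 <= alpha -> 0 <= mu -> 0 <= nn -> 0 <= cc alpha mu nn k.
Proof.
  intros Ha Hm Hn. rewrite cc_eq by auto. apply cond_pos_sum. intros j.
  unfold PP, BB. apply Rmult_le_pos; apply Rmult_le_pos; try apply pow_le; auto;
  left; apply Rinv_0_lt_compat. apply lt_0_INR, Factorial.lt_O_fact. apply gamma_pos; auto.
Qed.

Lemma cc_0 alpha mu nn : 0 <= mu -> cc alpha mu nn 0 = 1.
Proof. intros. rewrite cc_eq by auto. simpl. unfold PP, BB. rewrite gamma_0. simpl. field. Qed.


Ltac toR := lazymatch goal with |- @eq _ ?a ?b => change (@eq R a b) end.

Lemma pn (x:R) k : @pow_n (AbsRing.Ring R_AbsRing) x k = x ^ k.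
Proof. induction k; simpl; [reflexivity|]. rewrite IHk; reflexivity. Qed.

Ltac rpn := repeat (match goal with |- context [pow_n ?x ?k] => rewrite (pn x k) end).

Lemma exp_series y : is_series (fun k => y^k / INR (Factorial.fact k)) (exp y).
Proof.
  generalize (is_exp_Reals y). unfold is_pseries. apply is_series_ext.
  intros k. rewrite pow_n_pow. unfold scal; simpl. unfold mult; simpl. unfold Rdiv. ring.
Qed.

Lemma ex_abs_by (a b : nat -> R) : (forall k, Rabs (a k) <= b k) -> ex_series b ->
  ex_series (fun k => Rabs (a k)).
Proof.
  intros H Hb. apply (@ex_series_le R_AbsRing R_CompleteNormedModule _ b); auto. intros k. unfold norm; simpl.
  unfold abs; simpl. rewrite Rabs_Rabsolu. apply H.
Qed.

Lemma ex_exp_scaled c y : ex_series (fun k => c * (y^k / INR (Factorial.fact k))).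
Proof. exists (exp y * c). eapply is_series_ext; [|apply is_series_scal_r, exp_series]. intros; simpl; ring. Qed.

Lemma fact_mono i j : (i <= j)%nat -> INR (Factorial.fact i) <= INR (Factorial.fact j).
Proof. intros. apply le_INR, Factorial.fact_le; auto. Qed.

Lemma fact_pos i : 0 < INR (Factorial.fact i).
Proof. apply lt_0_INR, Factorial.lt_O_fact. Qed.

Lemma BB_bound mu nn y r i : 0 <= mu -> 0 <= y ->
  Rabs (BB mu nn (2*i + r) * y^i) <= Rabs nn ^ r * ((nn^2 * y)^i / INR (Factorial.fact i)).
Proof.
  intros Hmu Hy. unfold BB. pose proof (gamma_pos mu (2*i+r) Hmu) as Hg.
  pose proof (gamma_ge_fact mu (2*i+r) Hmu) as Hgf.
  pose proof (fact_mono i (2*i+r) ltac:(lia)) as Hf. pose proof (fact_pos i).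
  assert (Hyi : 0 <= y ^ i) by (apply pow_le; auto).
  rewrite Rabs_mult, Rabs_div by lra. rewrite (Rabs_right (gamma_mu mu (2*i+r))) by lra.
  rewrite (Rabs_right (y^i)) by lra.
  assert (Habs : Rabs (nn^(2*i+r)) = Rabs nn ^ r * (nn^2)^i).
  { rewrite <- RPow_abs, pow_add, pow_mult, pow2_abs. ring. }
  rewrite Habs, Rpow_mult_distr.
  assert (HA : 0 <= Rabs nn ^ r * (nn^2)^i * y^i).
  { apply Rmult_le_pos; auto. apply Rmult_le_pos. apply pow_le, Rabs_pos.
    apply pow_le. rewrite <- Rsqr_pow2; apply Rle_0_sqr. }
  unfold Rdiv.
  replace (Rabs nn ^ r * (nn ^ 2) ^ i * / gamma_mu mu (2 * i + r) * y ^ i) with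
    ((Rabs nn ^ r * (nn^2)^i * y^i) * / gamma_mu mu (2 * i + r)) by ring.
  replace (Rabs nn ^ r * ((nn ^ 2) ^ i * y ^ i * / INR (Factorial.fact i))) with
    ((Rabs nn ^ r * (nn^2)^i * y^i) * / INR (Factorial.fact i)) by ring.
  apply Rmult_le_compat_l; auto.
  apply Rinv_le_contravar; lra.
Qed.

Lemma BB_part_ex mu nn y r : 0 <= mu -> 0 <= y ->
  ex_series (fun i => Rabs (BB mu nn (2*i + r) * y^i)).
Proof.
  intros. apply (ex_abs_by _ (fun i => Rabs nn ^ r * ((nn^2 * y)^i / INR (Factorial.fact i)))).
  intros; apply BB_bound; auto. apply ex_exp_scaled.
Qed.

Lemma emu_ex mu w : 0 <= mu -> ex_series (fun m => Rabs (w^m / gamma_mu mu m)).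
Proof.
  intros Hmu. apply (ex_abs_by _ (fun m => 1 * (Rabs w ^ m / INR (Factorial.fact m)))).
  2: apply ex_exp_scaled.
  intros m. pose proof (gamma_pos mu m Hmu). pose proof (gamma_ge_fact mu m Hmu).
  pose proof (fact_pos m).
  rewrite Rabs_div by lra. rewrite (Rabs_right (gamma_mu mu m)) by lra. rewrite <- RPow_abs, Rmult_1_l.
  unfold Rdiv. apply Rmult_le_compat_l. apply pow_le, Rabs_pos.
  apply Rinv_le_contravar; lra.
Qed.

Lemma emu_is mu w : 0 <= mu -> is_series (fun m => w^m / gamma_mu mu m) (e_mu mu w).
Proof. intros. unfold e_mu. apply Series_correct. apply ex_series_Rabs. apply emu_ex; auto. Qed.

Lemma PP_is alpha y : is_series (fun j => PP alpha j * y^j) (exp (alpha * y)).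
Proof. generalize (exp_series (alpha*y)). apply is_series_ext. intros. unfold PP.
  lazymatch goal with |- @eq _ ?a ?b => change (@eq R a b) end. rewrite Rpow_mult_distr. unfold Rdiv; ring. Qed.

Lemma PP_ex alpha y : ex_series (fun j => Rabs (PP alpha j * y^j)).
Proof.
  apply (ex_abs_by _ (fun j => 1 * (Rabs (alpha*y) ^ j / INR (Factorial.fact j)))).
  2: apply ex_exp_scaled. intros j. unfold PP. pose proof (fact_pos j).
  rewrite Rmult_1_l, RPow_abs, Rpow_mult_distr. right. unfold Rdiv.
  rewrite !Rabs_mult, Rabs_inv, (Rabs_right (INR _)) by lra. ring.
Qed.

Lemma cc_part_is alpha mu nn y r : 0 <= mu -> 0 <= y -> (r <= 1)%nat ->
  is_series (fun q => cc alpha mu nn (2*q + r) * y^q)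
     (exp (alpha * y) * Series (fun i => BB mu nn (2*i + r) * y^i)).
Proof.
  intros Hmu Hy Hr.
  generalize (is_series_mult _ _ _ _ (PP_is alpha y)
     (Series_correct _ (ex_series_Rabs _ (BB_part_ex mu nn y r Hmu Hy)))
     (PP_ex alpha y) (BB_part_ex mu nn y r Hmu Hy)).
  apply is_series_ext. intros q. rewrite cc_eq by auto.
  replace (Nat.div2 (2*q + r)) with q.
  2:{ destruct r as [|[|r]]; [rewrite Nat.add_0_r, Nat.div2_double; auto| |lia].
      replace (2*q+1)%nat with (S (2*q)) by lia. rewrite Nat.div2_succ_double; auto. }
  toR. rewrite (Rmult_comm _ (y^q)), scal_sum. apply sum_eq. intros j Hj.
  replace (2 * (q - j) + r)%nat with (2*q + r - 2*j)%nat by lia.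
  assert (Hq : y^q = y^j * y^(q-j)) by (rewrite <- pow_add; f_equal; lia). rewrite Hq. ring.
Qed.

Lemma gen_fun alpha mu nn z : 0 <= mu ->
  is_series (fun k => cc alpha mu nn k * z^k) (exp (alpha * z^2) * e_mu mu (nn * z)).
Proof.
  intros Hmu. assert (Hy : 0 <= z^2) by (rewrite <- Rsqr_pow2; apply Rle_0_sqr).
  set (l0 := Series (fun i => BB mu nn (2*i + 0) * (z^2)^i)).
  set (l1 := Series (fun i => BB mu nn (2*i + 1) * (z^2)^i)).
  assert (HB : is_pseries (BB mu nn) z (l0 + z * l1)).
  { apply is_pseries_odd_even.
    - unfold is_pseries. eapply is_series_ext.
      2: apply (Series_correct _ (ex_series_Rabs _ (BB_part_ex mu nn (z^2) 0 Hmu Hy))).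
      intros i. unfold scal; simpl; unfold mult; simpl. rewrite ?Nat.add_0_r. toR. rpn. ring.
    - unfold is_pseries. eapply is_series_ext.
      2: apply (Series_correct _ (ex_series_Rabs _ (BB_part_ex mu nn (z^2) 1 Hmu Hy))).
      intros i. unfold scal; simpl; unfold mult; simpl. rewrite ?Nat.add_0_r. toR. rpn. ring. }
  assert (HE : e_mu mu (nn * z) = l0 + z * l1).
  { apply is_series_unique in HB. rewrite <- HB. unfold e_mu. apply Series_ext.
    intros m. unfold scal; simpl; unfold mult; simpl. unfold BB. toR. rpn.
    rewrite Rpow_mult_distr. unfold Rdiv; ring. }
  rewrite HE.
  assert (H : is_pseries (cc alpha mu nn) z (exp (alpha * z^2) * l0 + z * (exp (alpha * z^2) * l1))).
  { apply is_pseries_odd_even.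
    - unfold is_pseries. eapply is_series_ext.
      2: apply (cc_part_is alpha mu nn (z^2) 0 Hmu Hy ltac:(lia)).
      intros i. unfold scal; simpl; unfold mult; simpl. rewrite ?Nat.add_0_r. toR. rpn. ring.
    - unfold is_pseries. eapply is_series_ext.
      2: apply (cc_part_is alpha mu nn (z^2) 1 Hmu Hy ltac:(lia)).
      intros i. unfold scal; simpl; unfold mult; simpl. rewrite ?Nat.add_0_r. toR. rpn. ring. }
  unfold is_pseries in H. eapply is_series_ext. 2: { replace (exp (alpha * z ^ 2) * (l0 + z * l1))
    with (exp (alpha * z ^ 2) * l0 + z * (exp (alpha * z ^ 2) * l1)) by ring. apply H. }
  intros k. unfold scal; simpl; unfold mult; simpl. rewrite ?Nat.add_0_r. toR. rpn. ring.
Qed.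


Lemma isp_plus (a b : nat -> R) la lb : is_series a la -> is_series b lb ->
  is_series (fun k => a k + b k) (la + lb).
Proof. intros Ha Hb. exact (is_series_plus a b la lb Ha Hb). Qed.

Lemma isp_scal (a : nat -> R) c l : is_series a l -> is_series (fun k => c * a k) (c * l).
Proof. intros H. apply (is_series_ext (fun k => a k * c)). intros; simpl; ring.
  rewrite Rmult_comm. apply is_series_scal_r; auto. Qed.

Lemma isp_ext (a b : nat -> R) l l' : (forall k, a k = b k) -> l = l' -> is_series a l -> is_series b l'.
Proof. intros H Hl Ha. subst l'. exact (is_series_ext a b l H Ha). Qed.

Lemma isp_lim (a : nat -> R) l : is_series a l -> is_lim_seq (fun N => sum_f_R0 a N) l.
Proof. intros H. apply (is_lim_seq_ext (sum_n a)). intros; apply sum_n_Reals. exact H. Qed.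

Lemma isp_le (a b : nat -> R) la lb : is_series a la -> is_series b lb ->
  (forall k, a k <= b k) -> la <= lb.
Proof.
  intros Ha Hb H. apply isp_lim in Ha. apply isp_lim in Hb.
  assert (Rbar_le la lb). { eapply is_lim_seq_le; [|exact Ha|exact Hb].
    intros N. apply sum_Rle. intros; auto. } exact H0.
Qed.

Lemma isp_abs_le (a b : nat -> R) la lb : is_series a la -> is_series b lb ->
  (forall k, Rabs (a k) <= b k) -> Rabs la <= lb.
Proof.
  intros Ha Hb H. apply Rabs_le. split.
  - assert (- lb <= la). { apply (isp_le (fun k => -1 * b k) a). 
      replace (-lb) with (-1 * lb) by ring. apply isp_scal; auto. auto.
      intros k. specialize (H k). apply Rabs_le_between in H. lra. } lra.
  - apply (isp_le a b); auto. intros k. specialize (H k). apply Rabs_le_between in H. lra.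
Qed.

Lemma isp_ge0 (a : nat -> R) l : is_series a l -> (forall k, 0 <= a k) -> a 0%nat <= l.
Proof.
  intros Ha H. apply isp_lim in Ha.
  assert (Rbar_le (a 0%nat) l). { eapply is_lim_seq_le; [|apply is_lim_seq_const|exact Ha].
    intros N. simpl. induction N. simpl; lra. rewrite tech5. specialize (H (S N)). lra. }
  exact H0.
Qed.

Definition sh1 (f : nat -> R) (k : nat) : R := match k with O => 0 | S k' => f k' end.

Lemma is_series_sh1 f l : is_series f l -> is_series (sh1 f) l.
Proof.
  intros H. apply is_series_decr_1. simpl.
  change (is_series f (l + - 0)). rewrite Ropp_0, Rplus_0_r. exact H.
Qed.

Definition uu alpha mu nn x k := cc alpha mu nn k * x ^ k.

Lemma u_rec alpha mu nn x k : 0 <= mu ->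
  sk mu k * uu alpha mu nn x k = nn * x * sh1 (uu alpha mu nn x) k
     + 2 * alpha * x^2 * sh1 (sh1 (uu alpha mu nn x)) k.
Proof.
  intros Hmu. unfold uu. destruct k as [|[|k]]; simpl sh1.
  - rewrite sk_0. ring.
  - transitivity ((sk mu 1 * cc alpha mu nn 1) * x). simpl; ring.
    rewrite cc_rec1 by auto. simpl; ring.
  - transitivity ((sk mu (S (S k)) * cc alpha mu nn (S (S k))) * x^(S (S k))). ring.
    rewrite cc_rec2 by auto. simpl; ring.
Qed.

Lemma u2_rec alpha mu nn x k : 0 <= mu ->
  let u := uu alpha mu nn x in
  let v := fun j => sk mu j * u j in
  let w := fun j => (-1)^j * u j in
  sk mu k * (sk mu k * u k) = nn * x * (sh1 v k + sh1 u k + 2 * mu * sh1 w k)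
     + 2 * alpha * x^2 * (sh1 (sh1 v) k + 2 * sh1 (sh1 u) k).
Proof.
  intros Hmu u v w. unfold u at 1. rewrite u_rec by auto. fold u.
  destruct k as [|[|k]]; unfold v, w; simpl sh1; clearbody u.
  - rewrite sk_0. ring.
  - rewrite (sk_S mu 0), sk_0. simpl. ring.
  - pose proof (sk_S mu (S k)) as E1. pose proof (sk_SS mu k) as E2.
    transitivity (nn * x * ((sk mu (S k) + 1 + 2 * mu * (-1)^(S k)) * u (S k))
       + 2 * alpha * x^2 * ((sk mu k + 2) * u k)).
    rewrite <- E1, <- E2. clear E1 E2. generalize (sk mu (S (S k))) (u (S k)) (u k). intros. ring. simpl pow. ring.
Qed.

Lemma moments alpha mu nn x : 0 <= mu -> nn <> 0 ->
  let W := exp (alpha * x^2) * e_mu mu (nn * x) in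
  let Wm := exp (alpha * x^2) * e_mu mu (nn * - x) in
  is_series (uu alpha mu nn x) W /\
  is_series (fun k => uu alpha mu nn x k * (sk mu k / nn - x)) (2 * alpha * x^2 / nn * W) /\
  is_series (fun k => uu alpha mu nn x k * (sk mu k / nn - x)^2)
     ((x / nn + 4 * alpha^2 * x^4 / nn^2 + 4 * alpha * x^2 / nn^2) * W + 2 * mu * x / nn * Wm).
Proof.
  intros Hmu Hnn W Wm.
  set (u := uu alpha mu nn x).
  set (v := fun j => sk mu j * u j).
  set (w := fun j => (-1)^j * u j).
  assert (Hu : is_series u W) by apply gen_fun, Hmu.
  assert (Hw : is_series w Wm).
  { eapply isp_ext; [| |apply (gen_fun alpha mu nn (-x) Hmu)].
    intros k. unfold w, u, uu. replace (-x) with (-1 * x) by ring. rewrite Rpow_mult_distr. toR; ring.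
    unfold Wm. f_equal. f_equal. f_equal. toR; ring. }
  assert (Hv : is_series v ((nn * x + 2 * alpha * x^2) * W)).
  { eapply isp_ext; [ | | apply (isp_plus _ _ _ _ (isp_scal _ (nn * x) _ (is_series_sh1 _ _ Hu))
       (isp_scal _ (2 * alpha * x^2) _ (is_series_sh1 _ _ (is_series_sh1 _ _ Hu))))].
    intros k. unfold v, u. rewrite u_rec by auto. reflexivity. toR; ring. }
  assert (H2 : is_series (fun k => sk mu k * (sk mu k * u k))
     (nn * x * ((nn * x + 2 * alpha * x^2) * W + W + 2 * mu * Wm)
      + 2 * alpha * x^2 * ((nn * x + 2 * alpha * x^2) * W + 2 * W))).
  { eapply isp_ext; [intros k; symmetry; apply (u2_rec alpha mu nn x k Hmu)|reflexivity|].
    apply isp_plus; apply isp_scal.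
    - apply isp_plus. apply isp_plus. apply is_series_sh1, Hv. apply is_series_sh1, Hu.
      apply isp_scal, is_series_sh1, Hw.
    - apply isp_plus. apply is_series_sh1, is_series_sh1, Hv.
      apply isp_scal, is_series_sh1, is_series_sh1, Hu. }
  split; [exact Hu|split].
  - eapply isp_ext; [| |apply (isp_plus _ _ _ _ (isp_scal _ (/nn) _ Hv) (isp_scal _ (-x) _ Hu))].
    intros k; unfold v; toR; field; auto. toR; field; auto.
  - eapply isp_ext; [| |apply (isp_plus _ _ _ _ (isp_plus _ _ _ _ (isp_scal _ (/nn^2) _ H2)
       (isp_scal _ (-2 * x / nn) _ Hv)) (isp_scal _ (x^2) _ Hu))].
    intros k; unfold v; toR; field; auto. toR; field; auto.
Qed.


Definition dd2 (g : R -> R) (t s : R) : R := g (t + 2 * s) - 2 * g (t + s) + g t.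

Lemma grid_seq (P : nat -> R) w :
  (forall i : nat, Rabs (P (S (S i)) - 2 * P (S i) + P i) <= w) ->
  forall m : nat,
  Rabs ((P (S m) - P m) - (P 1%nat - P 0%nat)) <= INR m * w /\
  Rabs (P m - P 0%nat - INR m * (P 1%nat - P 0%nat)) <= INR m ^ 2 * w.
Proof.
  intros H. assert (Hw : 0 <= w) by (specialize (H O); pose proof (Rabs_pos (P 2%nat - 2 * P 1%nat + P 0%nat)); lra).
  induction m as [|m [IH1 IH2]].
  - simpl. replace (P 1%nat - P 0%nat - (P 1%nat - P 0%nat)) with 0 by ring.
    replace (P 0%nat - P 0%nat - 0 * (P 1%nat - P 0%nat)) with 0 by ring.
    rewrite Rabs_R0. split; lra.
  - specialize (H m). rewrite S_INR. split.
    + replace (P (S (S m)) - P (S m) - (P 1%nat - P 0%nat)) with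
        ((P (S (S m)) - 2 * P (S m) + P m) + ((P (S m) - P m) - (P 1%nat - P 0%nat))) by ring.
      eapply Rle_trans. apply Rabs_triang. lra.
    + replace (P (S m) - P 0%nat - (INR m + 1) * (P 1%nat - P 0%nat)) with
        ((P m - P 0%nat - INR m * (P 1%nat - P 0%nat)) + ((P (S m) - P m) - (P 1%nat - P 0%nat))) by ring.
      eapply Rle_trans. apply Rabs_triang. pose proof (pos_INR m). nra.
Qed.

Lemma grid (g : R -> R) y s w :
  (forall i : nat, Rabs (dd2 g (y + INR i * s) s) <= w) ->
  forall m : nat,
  Rabs ((g (y + INR m * s + s) - g (y + INR m * s)) - (g (y + s) - g y)) <= INR m * w /\
  Rabs (g (y + INR m * s) - g y - INR m * (g (y + s) - g y)) <= INR m ^ 2 * w.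
Proof.
  intros H m. set (P := fun i : nat => g (y + INR i * s)).
  assert (E0 : P 0%nat = g y) by (unfold P; simpl; f_equal; ring).
  assert (E1 : P 1%nat = g (y + s)) by (unfold P; simpl; f_equal; ring).
  assert (ES : P (S m) = g (y + INR m * s + s)) by (unfold P; rewrite S_INR; f_equal; ring).
  destruct (grid_seq P w) with (m := m) as [A B].
  - intros i. specialize (H i). unfold dd2 in H. unfold P. rewrite !S_INR.
    replace (y + (INR i + 1 + 1) * s) with (y + INR i * s + 2 * s) by ring.
    replace (y + (INR i + 1) * s) with (y + INR i * s + s) by ring. exact H.
  - rewrite <- E0, <- E1, <- ES. split; [exact A|exact B].
Qed.

Lemma nat_floor r : 0 <= r -> exists m : nat, INR m <= r < INR m + 1.
Proof.
  intros Hr. destruct (archimed r) as [H1 H2].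
  assert (Hz : (1 <= up r)%Z). { apply le_IZR. assert (IZR (up r) > 0) by lra.
    apply lt_IZR in H. apply IZR_le. lia. }
  exists (Z.to_nat (up r - 1)). rewrite INR_IZR_INZ, Znat.Z2Nat.id by lia.
  rewrite minus_IZR. simpl. lra.
Qed.

Lemma interp_max (phi : R -> R) a h w : 0 < h -> 0 <= w ->
  (forall c, a <= c <= a + h -> continuity_pt phi c) ->
  phi a = 0 -> phi (a + h) = 0 ->
  (forall z r, a <= z -> 0 < r -> z + 2 * r <= a + h -> - w <= dd2 phi z r) ->
  forall y, a <= y <= a + h -> phi y <= w.
Proof.
  intros Hh Hw Hc Ha Hah Hd y Hy.
  destruct (continuity_ab_maj phi a (a + h) ltac:(lra) Hc) as [y1 [Hmax Hy1]].
  apply Rle_trans with (phi y1); [apply Hmax; lra|].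
  destruct (Rle_dec (y1 - a) (a + h - y1)) as [Hle|Hgt].
  - destruct (Rle_lt_or_eq_dec a y1 (proj1 Hy1)) as [Hlt|Heq]; [|subst y1; lra].
    specialize (Hd a (y1 - a) ltac:(lra) ltac:(lra) ltac:(lra)). unfold dd2 in Hd.
    replace (a + (y1 - a)) with y1 in Hd by ring.
    assert (phi (a + 2 * (y1 - a)) <= phi y1) by (apply Hmax; lra). lra.
  - apply Rnot_le_lt in Hgt. destruct (Rle_lt_or_eq_dec y1 (a + h) (proj2 Hy1)) as [Hlt|Heq]; [|rewrite Heq; lra]. specialize (Hd (2 * y1 - a - h) (a + h - y1) ltac:(lra) ltac:(lra) ltac:(lra)). unfold dd2 in Hd.
    replace (2 * y1 - a - h + 2 * (a + h - y1)) with (a + h) in Hd by ring.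
    replace (2 * y1 - a - h + (a + h - y1)) with y1 in Hd by ring.
    assert (phi (2 * y1 - a - h) <= phi y1) by (apply Hmax; lra). lra.
Qed.

Lemma Rmax0_lip y z : Rabs (Rmax 0 y - Rmax 0 z) <= Rabs (y - z).
Proof. unfold Rmax. destruct (Rle_dec 0 y), (Rle_dec 0 z); unfold Rabs;
  repeat destruct Rcase_abs; lra. Qed.

Lemma CB_cont (g : R -> R) : CB g -> forall c, continuity_pt (fun y => g (Rmax 0 y)) c.
Proof.
  intros [_ Hu] c. unfold continuity_pt, continue_in, limit1_in, limit_in.
  intros eps Heps. destruct (Hu eps Heps) as [d [Hd H]]. exists d. split; auto.
  intros y [_ Hy]. simpl in *. unfold R_dist in *. apply H.
  apply Rmax_l. apply Rmax_l. eapply Rle_lt_trans. apply Rmax0_lip. exact Hy.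
Qed.

Lemma lin_interp (g : R -> R) a h w : CB g -> 0 <= a -> 0 < h -> 0 <= w ->
  (forall z r, 0 <= z -> 0 < r -> r <= h -> Rabs (dd2 g z r) <= w) ->
  forall y, a <= y <= a + h -> Rabs (g y - g a - (y - a) / h * (g (a + h) - g a)) <= w.
Proof.
  intros Hg Ha Hh Hw Hd y Hy.
  set (G := fun y => g (Rmax 0 y)).
  assert (HG : forall y, 0 <= y -> G y = g y) by (intros; unfold G; rewrite Rmax_right; auto).
  set (phi := fun y => G y - G a - (y - a) / h * (G (a + h) - G a)).
  assert (Hphic : forall c, continuity_pt phi c).
  { intros c. unfold phi. apply continuity_pt_minus. apply continuity_pt_minus.
    apply CB_cont; auto. apply continuity_pt_const. intros ? ?; reflexivity.
    apply continuity_pt_mult. apply continuity_pt_mult. apply continuity_pt_minus.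
    apply derivable_continuous_pt, derivable_pt_id.
    apply continuity_pt_const. intros ? ?; reflexivity.
    apply continuity_pt_const. intros ? ?; reflexivity.
    apply continuity_pt_const. intros ? ?; reflexivity. }
  assert (Hd2 : forall z r, a <= z -> 0 < r -> z + 2 * r <= a + h -> Rabs (dd2 phi z r) <= w).
  { intros z r Hz Hr Hzr. unfold dd2, phi.
    replace (G (z + 2 * r) - G a - (z + 2 * r - a) / h * (G (a + h) - G a) -
      2 * (G (z + r) - G a - (z + r - a) / h * (G (a + h) - G a)) +
      (G z - G a - (z - a) / h * (G (a + h) - G a))) with (dd2 g z r).
    apply Hd; lra. unfold dd2. rewrite !HG by lra. field. lra. }
  assert (Hpa : phi a = 0) by (unfold phi; field; lra).
  assert (Hpah : phi (a + h) = 0) by (unfold phi; field; lra).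
  assert (E : g y - g a - (y - a) / h * (g (a + h) - g a) = phi y) by (unfold phi; rewrite !HG by lra; reflexivity).
  rewrite E. apply Rabs_le. split.
  - assert (- phi y <= w); [|lra].
    apply (interp_max (fun y => - phi y) a h w); auto.
    + intros c _. apply continuity_pt_opp, Hphic.
    + rewrite Hpa; ring.
    + rewrite Hpah; ring.
    + intros z r Hz Hr Hzr. specialize (Hd2 z r Hz Hr Hzr). unfold dd2 in *.
      apply Rabs_le_between in Hd2. lra.
  - apply (interp_max phi a h w); auto.
    intros z r Hz Hr Hzr. specialize (Hd2 z r Hz Hr Hzr). apply Rabs_le_between in Hd2. lra.
Qed.


Lemma right_est (g : R -> R) x delta w : CB g -> 0 <= x -> 0 < delta -> 0 <= w ->
  (forall t s, 0 <= t -> 0 < s -> s <= delta -> Rabs (dd2 g t s) <= w) ->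
  forall t, x <= t ->
  Rabs (g t - g x - (t - x) * ((g (x + delta) - g x) / delta)) <= 2 * (1 + (t - x)^2 / delta^2) * w.
Proof.
  intros Hg Hx Hd Hw Hw2 t Ht.
  destruct (nat_floor ((t - x) / delta)) as [m [Hm1 Hm2]].
  { apply Rmult_le_pos; [lra|]. left; apply Rinv_0_lt_compat; lra. }
  set (y := x + INR m * delta).
  assert (Hm0 := pos_INR m).
  assert (Hy : 0 <= y) by (unfold y; nra).
  destruct (grid g x delta w) with (m := m) as [A1 A2].
  { intros i. apply Hw2; try lra. pose proof (pos_INR i). nra. }
  fold y in A1, A2.
  assert (Hty : y <= t <= y + delta).
  { unfold y. split.
    - apply Rmult_le_compat_r with (r := delta) in Hm1; [|lra].
      unfold Rdiv in Hm1. rewrite Rmult_assoc, Rinv_l, Rmult_1_r in Hm1 by lra. lra.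
    - apply Rmult_lt_compat_r with (r := delta) in Hm2; [|lra].
      unfold Rdiv in Hm2. rewrite Rmult_assoc, Rinv_l, Rmult_1_r in Hm2 by lra. lra. }
  assert (A3 := lin_interp g y delta w Hg Hy Hd Hw ltac:(intros; apply Hw2; lra) t Hty).
  set (lam := (t - y) / delta).
  assert (Hlam : 0 <= lam <= 1).
  { unfold lam. split. apply Rmult_le_pos; [lra|left; apply Rinv_0_lt_compat; lra].
    apply Rmult_le_reg_r with delta; auto. unfold Rdiv. rewrite Rmult_assoc, Rinv_l by lra. lra. }
  fold lam in A3.
  assert (E : g t - g x - (t - x) * ((g (x + delta) - g x) / delta) =
     (g t - g y - lam * (g (y + delta) - g y)) + (g y - g x - INR m * (g (x + delta) - g x))
     + lam * ((g (y + delta) - g y) - (g (x + delta) - g x))).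
  { unfold lam, y. field. lra. }
  rewrite E.
  assert (Hm3 : INR m ^ 2 <= (t - x)^2 / delta^2).
  { replace ((t - x)^2 / delta^2) with (((t - x) / delta)^2) by (field; lra).
    apply pow_incr; lra. }
  eapply Rle_trans. apply Rabs_triang. eapply Rle_trans. apply Rplus_le_compat_l.
  rewrite Rabs_mult, (Rabs_right lam) by lra. apply Rmult_le_compat_l. lra. exact A1.
  eapply Rle_trans. apply Rplus_le_compat_r. apply Rabs_triang.
  assert (lam * (INR m * w) <= INR m * w) by (assert (0 <= INR m * w) by nra; nra).
  assert (INR m <= 1 + INR m ^ 2) by nra.
  assert (INR m * w <= (1 + INR m ^2) * w) by (apply Rmult_le_compat_r; auto).
  assert (INR m ^ 2 * w <= (t - x)^2 / delta^2 * w) by (apply Rmult_le_compat_r; auto).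
  nra.
Qed.

Lemma left_est (g : R -> R) x delta w : CB g -> 0 <= x -> 0 < delta -> 0 <= w ->
  (forall t s, 0 <= t -> 0 < s -> s <= delta -> Rabs (dd2 g t s) <= w) ->
  forall t, 0 <= t -> t < x ->
  Rabs (g t - g x - (t - x) * ((g (x + delta) - g x) / delta)) <= 14 * (1 + (t - x)^2 / delta^2) * w.
Proof.
  intros Hg Hx Hd Hw Hw2 t Ht0 Ht.
  set (L := x - t).
  destruct (nat_floor (L / delta)) as [m0 [Hm1 Hm2]].
  { apply Rmult_le_pos; [unfold L; lra|]. left; apply Rinv_0_lt_compat; lra. }
  set (m := S m0). assert (HmR : INR m = INR m0 + 1) by (unfold m; apply S_INR).
  assert (Hm0 := pos_INR m0).
  set (s := L / INR m).
  assert (Hs : 0 < s) by (unfold s, L; apply Rdiv_lt_0_compat; lra).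
  assert (Hsd : s <= delta).
  { unfold s. apply Rmult_le_reg_r with (INR m); [lra|]. unfold Rdiv.
    rewrite Rmult_assoc, Rinv_l, Rmult_1_r by lra.
    apply Rmult_lt_compat_r with (r := delta) in Hm2; [|lra].
    unfold Rdiv in Hm2. rewrite Rmult_assoc, Rinv_l, Rmult_1_r in Hm2 by lra. rewrite HmR; nra. }
  assert (Hgr : forall i : nat, Rabs (dd2 g (t + INR i * s) s) <= w).
  { intros i. apply Hw2; try lra. pose proof (pos_INR i). nra. }
  destruct (grid g t s w Hgr m) as [_ B1].
  destruct (grid g t s w Hgr (m + m)) as [_ B2].
  assert (Ex1 : t + INR m * s = x) by (unfold s, L; field; lra).
  assert (Ex2 : t + INR (m + m) * s = x + L) by (rewrite plus_INR; unfold s, L; field; lra).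
  rewrite Ex1 in B1. rewrite Ex2 in B2. rewrite plus_INR in B2.
  assert (HR := right_est g x delta w Hg Hx Hd Hw Hw2 (x + L) ltac:(unfold L; lra)).
  replace (x + L - x) with L in HR by ring.
  assert (E : g t - g x - (t - x) * ((g (x + delta) - g x) / delta) =
    ((g (x + L) - g t - (INR m + INR m) * (g (t + s) - g t))
     - 2 * (g x - g t - INR m * (g (t + s) - g t)))
    - (g (x + L) - g x - L * ((g (x + delta) - g x) / delta))).
  { unfold L. ring. }
  rewrite E.
  assert (Hm3 : INR m ^ 2 <= 2 * (1 + L^2 / delta^2)).
  { assert (INR m <= L / delta + 1) by lra.
    assert (0 <= L / delta) by lra.
    replace (L^2 / delta^2) with ((L / delta)^2) by (field; lra). assert (INR m ^ 2 <= (L / delta + 1)^2) by (apply pow_incr; lra). pose proof (pow2_ge_0 (L / delta - 1)). nra. }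
  replace ((t - x)^2) with (L^2) by (unfold L; ring).
  eapply Rle_trans. apply Rabs_triang. rewrite Rabs_Ropp.
  eapply Rle_trans. apply Rplus_le_compat_r. eapply Rle_trans. apply Rabs_triang.
  rewrite Rabs_Ropp, Rabs_mult, (Rabs_right 2) by lra. apply Rplus_le_compat. exact B2.
  apply Rmult_le_compat_l. lra. exact B1.
  assert (0 <= L^2/delta^2) by (apply Rmult_le_pos; [apply pow2_ge_0| left; apply Rinv_0_lt_compat, pow_lt; lra]).
  assert (INR m ^ 2 * w <= 2 * (1 + L ^ 2 / delta ^ 2) * w) by (apply Rmult_le_compat_r; auto).
  nra.
Qed.

Lemma point_est (g : R -> R) x delta w : CB g -> 0 <= x -> 0 < delta -> 0 <= w ->
  (forall t s, 0 <= t -> 0 < s -> s <= delta -> Rabs (dd2 g t s) <= w) ->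
  forall t, 0 <= t ->
  Rabs (g t - g x - (t - x) * ((g (x + delta) - g x) / delta)) <= 14 * (1 + (t - x)^2 / delta^2) * w.
Proof.
  intros Hg Hx Hd Hw Hw2 t Ht.
  destruct (Rlt_or_le t x) as [H|H].
  - apply left_est; auto.
  - apply Rle_trans with (2 * (1 + (t-x)^2/delta^2) * w). { apply right_est; auto. }
    assert (0 <= 1 + (t - x)^2/delta^2) by (pose proof (pow2_ge_0 (t-x)); apply Rplus_le_le_0_compat; [lra|apply Rmult_le_pos; [lra| left; apply Rinv_0_lt_compat, pow_lt; lra]]).
    assert (0 <= (t - x)^2/delta^2) by (apply Rmult_le_pos; [apply pow2_ge_0| left; apply Rinv_0_lt_compat, pow_lt; lra]).
    nra.
Qed.

Lemma D_bound (g : R -> R) x delta w Sg : 0 <= x -> 0 < delta -> delta < 1 -> 0 <= w ->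
  (forall t s, 0 <= t -> 0 < s -> s <= delta -> Rabs (dd2 g t s) <= w) ->
  (forall y, 0 <= y -> Rabs (g y) <= Sg) ->
  Rabs ((g (x + delta) - g x) / delta) <= 2 * Sg + 2 * w / delta^2.
Proof.
  intros Hx Hd Hd1 Hw Hw2 HS.
  destruct (nat_floor (1 / delta)) as [m0 [Hm1 Hm2]].
  { left; apply Rdiv_lt_0_compat; lra. }
  set (m := S m0). assert (HmR : INR m = INR m0 + 1) by (unfold m; apply S_INR).
  assert (Hm0 := pos_INR m0).
  assert (Hgr : forall i : nat, Rabs (dd2 g (x + INR i * delta) delta) <= w).
  { intros i. apply Hw2; try lra. pose proof (pos_INR i). nra. }
  destruct (grid g x delta w Hgr m) as [_ B].
  set (d0 := g (x + delta) - g x). fold d0 in B.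
  assert (H1 : INR m * Rabs d0 <= 2 * Sg + INR m ^ 2 * w).
  { assert (Hxm : 0 <= x + INR m * delta) by nra.
    pose proof (HS _ Hxm). pose proof (HS _ Hx).
    replace (INR m * Rabs d0) with (Rabs (INR m * d0)) by (rewrite Rabs_mult, Rabs_right; lra).
    replace (INR m * d0) with ((g (x + INR m * delta) - g x) - (g (x + INR m * delta) - g x - INR m * d0)) by ring.
    eapply Rle_trans. apply Rabs_triang. rewrite Rabs_Ropp.
    assert (Rabs (g (x + INR m * delta) - g x) <= 2 * Sg).
    { eapply Rle_trans. apply Rabs_triang. rewrite Rabs_Ropp. lra. }
    lra. }
  assert (Hmd : 1 < INR m * delta).
  { apply Rmult_lt_compat_r with (r := delta) in Hm2; [|lra].
    unfold Rdiv in Hm2. rewrite Rmult_1_l, Rinv_l in Hm2 by lra. rewrite HmR; nra. }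
  assert (Hmd2 : INR m * delta <= 1 + delta).
  { apply Rmult_le_compat_r with (r := delta) in Hm1; [|lra].
    unfold Rdiv in Hm1. rewrite Rmult_1_l, Rinv_l in Hm1 by lra. rewrite HmR; nra. }
  assert (HSp : 0 <= Sg) by (pose proof (HS _ Hx); pose proof (Rabs_pos (g x)); lra).
  unfold Rdiv. rewrite Rabs_mult, (Rabs_right (/ delta)) by (left; apply Rinv_0_lt_compat; lra).
  apply Rmult_le_reg_l with (INR m * delta * delta). nra.
  replace (INR m * delta * delta * (Rabs d0 * / delta)) with (delta * (INR m * Rabs d0)) by (field; lra).
  replace (INR m * delta * delta * (2 * Sg + 2 * w * / delta ^ 2)) with
     (INR m * delta * delta * (2 * Sg) + 2 * INR m * w) by (field; lra).
  assert (delta * (INR m * Rabs d0) <= delta * (2 * Sg + INR m ^ 2 * w)) by (apply Rmult_le_compat_l; lra).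
  assert (delta * (2 * Sg) <= INR m * delta * delta * (2 * Sg)) by (assert (0 <= (INR m * delta - 1) * (delta * (2*Sg))) by (apply Rmult_le_pos; nra); nra).
  assert (delta * (INR m ^ 2 * w) <= 2 * INR m * w).
  { replace (delta * (INR m ^ 2 * w)) with ((INR m * delta) * (INR m * w)) by ring.
    assert (0 <= INR m * w) by nra. assert (0 <= (2 - INR m * delta) * (INR m * w)) by (apply Rmult_le_pos; lra). nra. }
  lra.
Qed.


Lemma lub_prop (E : R -> Prop) Bd : (forall y, E y -> y <= Bd) -> (forall y, E y -> 0 <= y) ->
  (forall y, E y -> y <= real (Lub_Rbar E)) /\ 0 <= real (Lub_Rbar E).
Proof.
  intros HB H0. destruct (Lub_Rbar_correct E) as [Hub Hl].
  destruct (Lub_Rbar E) as [r| |] eqn:Hr; simpl.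
  - split. intros y Ey. exact (Hub y Ey).
    destruct (classic (exists y, E y)) as [[y Ey]|Hne].
    + specialize (Hub y Ey). simpl in Hub. specialize (H0 y Ey). lra.
    + exfalso. assert (Rbar_le r m_infty). { apply Hl. intros y Ey. exfalso; apply Hne; eauto. }
      exact H.
  - exfalso. assert (Rbar_le p_infty Bd). { apply Hl. intros y Ey. simpl. apply HB; auto. }
    exact H.
  - split. intros y Ey. exfalso. exact (Hub y Ey). lra.
Qed.

Lemma supnorm_prop (g : R -> R) : CB g ->
  (forall y, 0 <= y -> Rabs (g y) <= supnorm g) /\ 0 <= supnorm g.
Proof.
  intros [[Bd HB] _]. unfold supnorm.
  destruct (lub_prop (fun y => exists x, 0 <= x /\ y = Rabs (g x)) Bd) as [H1 H2].
  - intros y [x [Hx ->]]. auto.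
  - intros y [x [Hx ->]]. apply Rabs_pos.
  - split; auto. intros y Hy. apply H1. eauto.
Qed.

Lemma omega2_prop (g : R -> R) delta : CB g ->
  (forall t s, 0 <= t -> 0 < s -> s <= delta -> Rabs (dd2 g t s) <= omega2 g delta) /\
  0 <= omega2 g delta.
Proof.
  intros [[Bd HB] _]. unfold omega2.
  destruct (lub_prop (fun y => exists s t, 0 < s /\ s <= delta /\ 0 <= t /\
          y = Rabs (g (t + 2 * s) - 2 * g (t + s) + g t)) (4 * Bd)) as [H1 H2].
  - intros y [s [t [Hs [Hsd [Ht ->]]]]].
    pose proof (HB (t + 2 * s) ltac:(lra)). pose proof (HB (t + s) ltac:(lra)). pose proof (HB t Ht).
    eapply Rle_trans. apply Rabs_triang. eapply Rle_trans. apply Rplus_le_compat_r. apply Rabs_triang.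
    rewrite Rabs_Ropp, Rabs_mult, (Rabs_right 2) by lra. lra.
  - intros y [s [t [_ [_ [_ ->]]]]]. apply Rabs_pos.
  - split; auto. intros t s Ht Hs Hsd. apply H1. exists s, t. unfold dd2. repeat split; auto.
Qed.


Theorem theorem9 (alpha mu : R) (Halpha : 0 <= alpha) (Hmu : 0 <= mu) :
  exists M : R, 0 < M /\
    forall (g : R -> R), CB g ->
    forall (n : nat), (0 < n)%nat ->
    forall x : R, 0 <= x ->
      Rabs (T_op alpha mu n g x - g x) <=
      2 * M * (Rmin 1 (chi alpha mu n x / 2) * supnorm g
               + omega2 g (sqrt (chi alpha mu n x / 2))).
Proof.
  exists 30. split; [lra|].
  intros g Hg n Hn x Hx.
  set (nn := INR n). assert (Hnn : 0 < nn) by (apply lt_0_INR; auto).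
  destruct (supnorm_prop g Hg) as [HS HS0]. set (Sg := supnorm g) in *.
  destruct (moments alpha mu nn x Hmu ltac:(lra)) as [Hu0 [H1 H2]].
  set (W := exp (alpha * x^2) * e_mu mu (nn * x)) in *.
  set (Wm := exp (alpha * x^2) * e_mu mu (nn * - x)) in *.
  set (u := uu alpha mu nn x) in *.
  assert (Hupos : forall k, 0 <= u k).
  { intros k. unfold u, uu. apply Rmult_le_pos. apply cc_nonneg; lra. apply pow_le; auto. }
  assert (HW1 : 1 <= W).
  { pose proof (isp_ge0 _ _ Hu0 Hupos). unfold u, uu in H. rewrite cc_0 in H by auto. simpl in H. lra. }
  assert (Hexp : 0 < exp (alpha * x^2)) by apply exp_pos.
  assert (He : 0 < e_mu mu (nn * x)).
  { unfold W in HW1. destruct (Rlt_or_le 0 (e_mu mu (nn * x))) as [h|h]; auto. nra. }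
  set (t := fun k => sk mu k / nn).
  assert (Ht0 : forall k, 0 <= t k).
  { intros k. unfold t, sk. apply Rdiv_le_0_compat; auto. pose proof (pos_INR k).
    pose proof (theta_range k). nra. }
  set (beta := 2 * alpha * x^2 / nn).
  set (Delta2 := x / nn + 4 * alpha^2 * x^4 / nn^2 + 4 * alpha * x^2 / nn^2 + 2 * mu * x / nn * (Wm / W)).
  assert (H2' : is_series (fun k => u k * (t k - x)^2) (Delta2 * W)).
  { eapply isp_ext; [intros; reflexivity| |exact H2]. unfold Delta2. toR. field. lra. }
  assert (Hchi : chi alpha mu n x = beta + Delta2).
  { unfold chi, beta, Delta2. fold nn. unfold Wm, W.
    replace (nn * - x) with (- (nn * x)) by ring. field. split; lra. }
  assert (HD2 : x^2 <= Delta2 * W).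
  { pose proof (isp_ge0 _ _ H2' ltac:(intros k; apply Rmult_le_pos; [auto|apply pow2_ge_0])).
    unfold u, uu, t in H. rewrite cc_0, sk_0 in H by auto. simpl in H.
    replace (x * (x * 1)) with (x^2) in H by ring. lra. }
  assert (HD2p : 0 <= Delta2).
  { destruct (Rlt_or_le Delta2 0) as [h|h]; auto. pose proof (pow2_ge_0 x). nra. }
  assert (Hbeta : 0 <= beta) by (unfold beta; apply Rdiv_le_0_compat; auto; pose proof (pow2_ge_0 x); nra).
  assert (Hchi0 : 0 <= chi alpha mu n x) by lra.
  assert (Hex : ex_series (fun k => u k * g (t k))).
  { apply ex_series_Rabs. apply (ex_abs_by _ (fun k => Sg * u k)).
    intros k. rewrite Rabs_mult, (Rabs_right (u k)) by (apply Rle_ge; auto).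
    rewrite Rmult_comm. apply Rmult_le_compat_r; auto.
    eexists. apply isp_scal, Hu0. }
  set (LT := Series (fun k => u k * g (t k))).
  assert (HLT : is_series (fun k => u k * g (t k)) LT) by (apply Series_correct; auto).
  assert (HT : T_op alpha mu n g x = / W * LT) by reflexivity.
  assert (HF : is_series (fun k => u k * (g (t k) - g x)) (LT - g x * W)).
  { eapply isp_ext; [| |exact (isp_plus _ _ _ _ HLT (isp_scal _ (- g x) _ Hu0))].
    intros k; simpl; ring. toR; ring. }
  assert (HTg : Rabs (T_op alpha mu n g x - g x) = Rabs (LT - g x * W) / W).
  { rewrite HT. replace (/ W * LT - g x) with ((LT - g x * W) / W) by (field; lra).
    unfold Rdiv. rewrite Rabs_mult, (Rabs_right (/ W)). reflexivity.
    left; apply Rinv_0_lt_compat; lra. }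
  destruct (omega2_prop g (sqrt (chi alpha mu n x / 2)) Hg) as [Hw Hw0].
  set (w := omega2 g (sqrt (chi alpha mu n x / 2))) in *.
  set (delta := sqrt (chi alpha mu n x / 2)) in *.
  assert (Hmin0 : 0 <= Rmin 1 (chi alpha mu n x / 2)) by (apply Rmin_glb; lra).
  assert (HRHS : 0 <= 2 * 30 * (Rmin 1 (chi alpha mu n x / 2) * Sg + w)).
  { apply Rmult_le_pos; [lra|]. apply Rplus_le_le_0_compat; auto. apply Rmult_le_pos; auto. }
  destruct (Req_dec x 0) as [Hx0|Hxp].
  -
    assert (HF0 : is_series (fun k => u k * (g (t k) - g x)) 0).
    { eapply isp_ext; [| |exact (isp_scal _ 0 _ Hu0)].
      intros k. destruct k as [|k].
      + unfold t. rewrite sk_0. rewrite Hx0. unfold Rdiv. replace (0 * / nn) with 0 by ring. ring.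
      + unfold u, uu. rewrite Hx0. simpl. ring.
      + toR; ring. }
    assert (LT - g x * W = 0).
    { apply is_series_unique in HF. apply is_series_unique in HF0. congruence. }
    rewrite HTg, H. rewrite Rabs_R0. unfold Rdiv. rewrite Rmult_0_l. exact HRHS.
  - assert (Hxp' : 0 < x) by lra.
    assert (HD2pp : 0 < Delta2).
    { assert (0 < x^2) by (apply pow_lt; auto). destruct (Rlt_or_le 0 Delta2) as [h|h]; auto. nra. }
    assert (Hdpos : 0 < delta) by (unfold delta; apply sqrt_lt_R0; lra).
    assert (Hdsq : delta^2 = chi alpha mu n x / 2).
    { unfold delta. rewrite <- Rsqr_pow2. apply Rsqr_sqrt. lra. }
    destruct (Rle_or_lt 1 (chi alpha mu n x / 2)) as [Hbig|Hsmall].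
    + rewrite Rmin_left by lra.
      assert (HB2 : Rabs (LT - g x * W) <= 2 * Sg * W).
      { apply (isp_abs_le _ (fun k => 2 * Sg * u k) _ _ HF (isp_scal _ _ _ Hu0)).
        intros k. rewrite Rabs_mult, (Rabs_right (u k)) by (apply Rle_ge; auto).
        rewrite Rmult_comm. apply Rmult_le_compat_r; auto.
        eapply Rle_trans. apply Rabs_triang. rewrite Rabs_Ropp.
        pose proof (HS _ (Ht0 k)). pose proof (HS _ Hx). lra. }
      rewrite HTg. apply Rmult_le_reg_r with W; [lra|].
      unfold Rdiv. rewrite Rmult_assoc, Rinv_l, Rmult_1_r by lra.
      assert (0 <= w * W) by (apply Rmult_le_pos; lra). nra.
    + rewrite Rmin_right by lra.
      assert (Hd1 : delta < 1) by nra.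
      set (D := (g (x + delta) - g x) / delta).
      assert (HDb := D_bound g x delta w Sg Hx Hdpos Hd1 Hw0 Hw HS). fold D in HDb.
      assert (HR : is_series (fun k => u k * (g (t k) - g x - (t k - x) * D)) (LT - g x * W - D * (beta * W))).
      { eapply isp_ext; [| |exact (isp_plus _ _ _ _ HF (isp_scal _ (- D) _ H1))].
        intros k; unfold t; simpl; ring. unfold beta. toR; ring. }
      assert (HRb : Rabs (LT - g x * W - D * (beta * W)) <= 14 * w * W + 14 * w / delta^2 * (Delta2 * W)).
      { apply (isp_abs_le _ (fun k => 14 * w * u k + 14 * w / delta^2 * (u k * (t k - x)^2)) _ _ HR
           (isp_plus _ _ _ _ (isp_scal _ _ _ Hu0) (isp_scal _ _ _ H2'))).
        intros k. rewrite Rabs_mult, (Rabs_right (u k)) by (apply Rle_ge; auto).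
        pose proof (point_est g x delta w Hg Hx Hdpos Hw0 Hw (t k) (Ht0 k)) as P. fold D in P.
        apply Rmult_le_compat_l with (r := u k) in P; [|auto].
        eapply Rle_trans. exact P. right. field. lra. }
      assert (HD2d : Delta2 <= 2 * delta^2) by lra.
      assert (Hbd : beta <= 2 * delta^2) by lra.
      assert (Hfin : Rabs (LT - g x * W) <= (4 * (chi alpha mu n x / 2) * Sg + 46 * w) * W).
      { replace (LT - g x * W) with ((LT - g x * W - D * (beta * W)) + D * (beta * W)) by ring.
        eapply Rle_trans. apply Rabs_triang. rewrite Rabs_mult, (Rabs_mult beta W).
        rewrite (Rabs_right beta), (Rabs_right W) by lra.
        assert (Hq : 14 * w / delta ^ 2 * (Delta2 * W) <= 28 * w * W).
        { unfold Rdiv. replace (14 * w * / delta ^ 2 * (Delta2 * W)) with (14 * w * W * (Delta2 / delta^2)) by (field; lra).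
          replace (28 * w * W) with (14 * w * W * 2) by ring. apply Rmult_le_compat_l.
          assert (0 <= w * W) by nra. nra.
          apply Rmult_le_reg_r with (delta^2). apply pow_lt; lra. unfold Rdiv.
          rewrite Rmult_assoc, Rinv_l, Rmult_1_r. lra. apply pow_nonzero; lra. }
        assert (Hq2 : Rabs D * (beta * W) <= (2 * Sg * (2 * delta^2) + 4 * w) * W).
        { assert (Rabs D * beta <= 2 * Sg * (2 * delta^2) + 4 * w).
          { eapply Rle_trans. apply Rmult_le_compat_r. exact Hbeta. exact HDb.
            replace ((2 * Sg + 2 * w / delta ^ 2) * beta) with (2 * Sg * beta + 2 * w * (beta / delta^2)) by (field; lra).
            assert (beta / delta^2 <= 2).
            { apply Rmult_le_reg_r with (delta^2). apply pow_lt; lra. unfold Rdiv.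
              rewrite Rmult_assoc, Rinv_l, Rmult_1_r. lra. apply pow_nonzero; lra. }
            nra. }
          rewrite <- Rmult_assoc. apply Rmult_le_compat_r; lra. }
        rewrite Hdsq in Hq2. nra. }
      rewrite HTg. apply Rmult_le_reg_r with W; [lra|].
      unfold Rdiv. rewrite Rmult_assoc, Rinv_l, Rmult_1_r by lra.
      assert (0 <= chi alpha mu n x / 2 * Sg * W) by (apply Rmult_le_pos; [apply Rmult_le_pos|]; lra). assert (0 <= w * W) by (apply Rmult_le_pos; lra). lra.
Qed.
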